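(* Let $F:\mathcal A\to\mathcal B$ be a modal functor between modal categories, and suppose the semantic functor $(-)^+_{\mathcal B}$ is injective on objects. Then $F$ preserves arbitrary meets fibre-wise (i.e. for every set $X$ the restriction $F_X:\mathcal A_X\to\mathcal B_X$ preserves all meets, including the empty meet) if and only if $F$ preserves the interpretation of $\mathcal L^D_{\Sigma_l}$ for every nonempty set $\Sigma$. Dually, $F$ preserves arbitrary joins fibre-wise iff $F$ preserves the interpretation of $\mathcal L^D_{\Sigma_r}$ for every nonempty set $\Sigma$. Here preserving the interpretation means: for every set $X$, every tuple $(A_a)_{a\in\Sigma}$ in $\mathcal A_X$, every $V:\mathsf P\to\wp(X)$ and every formula $\varphi$, $[\![\varphi]\!]^V_{(A_a)_a}=[\![\varphi]\!]^V_{(FA_a)_a}$.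
   Context: A modal category is a topological category $\mathcal A$ over $\mathbf{Set}$ (faithful forgetful functor; every structured source has exactly one initial lift; each fibre $\mathcal A_X$ of objects over $X$, ordered by $A\le A'$ iff $\mathrm{id}_X$ is a morphism $A\to A'$, is a complete lattice) with a concrete functor $(-)^+:\mathcal A\to\mathbf{CABAO}$; $\mathbf{CABAO}$ has objects $(X,m)$ with $m:\wp(X)\to\wp(X)$ arbitrary and morphisms $f:(X,m)\to(Y,n)$ the functions with $f^{-1}(n(T))\subseteq m(f^{-1}(T))$ for all $T$; $A^+$ is the operator of $A$. A modal functor is a concrete functor $F$ (commuting with the forgetful functors) with $(FA)^+_{\mathcal B}=A^+_{\mathcal A}$ for all $A$. Fix a nonempty set $\mathsf P$ of propositional variables. $\mathcal L^D_{\Sigma_l}$ and $\mathcal L^D_{\Sigma_r}$ have formulas $p\mid\varphi\wedge\psi\mid\neg\varphi\mid\Box_G\varphi\mid K_GH$ for $p\in\mathsf P$, $G,H\subseteq\Sigma$. On a tuple $(A_a)_{a\in\Sigma}$ in $\mathcal A_X$ and $V:\mathsf P\to\wp(X)$: let $A_G=\bigwedge_{a\in G}A_a$ (meet in $\mathcal A_X$) for $\mathcal L^D_{\Sigma_l}$, and $A_G=\bigvee_{a\in G}A_a$ for $\mathcal L^D_{\Sigma_r}$; $[\![p]\!]=V(p)$, Boolean connectives are intersection and complement, $[\![\Box_G\varphi]\!]=A_G^+([\![\varphi]\!])$, $[\![K_GH]\!]=\{x:\forall S\subseteq X\,(x\in A_H^+(S)\Rightarrow x\in A_G^+(S))\}$.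 The tuple $(FA_a)_a$ is interpreted in $\mathcal B$ in the same way. *)

(* Defs.v *)
Set Implicit Arguments.
Unset Strict Implicit.

(** A concrete category over Set is presented by its fibres: [fib X] is the
    type of objects A with underlying set X, and [hom A B f] says that the
    function f : X -> Y underlies a morphism A -> B (faithfulness is built in). *)

Section Generic.
Variable fib : Type -> Type.
Variable hom : forall X Y : Type, fib X -> fib Y -> (X -> Y) -> Prop.

Definition fle (X : Type) (A A' : fib X) : Prop := hom A A' (fun x => x).

Definition is_glb (X I : Type) (fam : I -> fib X) (m : fib X) : Prop :=
  (forall i, fle m (fam i)) /\ (forall b, (forall i, fle b (fam i)) -> fle b m).

Definition is_lub (X I : Type) (fam : I -> fib X) (m : fib X) : Prop :=
  (forall i, fle (fam i) m) /\ (forall b, (forall i, fle (fam i) b) -> fle m b).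

Definition initial_lift (X I : Type) (Y : I -> Type) (B : forall i, fib (Y i))
  (f : forall i, X -> Y i) (A : fib X) : Prop :=
  (forall i, hom A (B i) (f i)) /\
  (forall (Z : Type) (C : fib Z) (g : Z -> X),
      hom C A g <-> (forall i, hom C (B i) (fun z => f i (g z)))).
End Generic.

Record ModalCat := {
  fib : Type -> Type;
  hom : forall X Y : Type, fib X -> fib Y -> (X -> Y) -> Prop;
  hom_id : forall (X : Type) (A : fib X), hom A A (fun x => x);
  hom_comp : forall (X Y Z : Type) (A : fib X) (B : fib Y) (C : fib Z)
      (f : X -> Y) (g : Y -> Z),
      hom A B f -> hom B C g -> hom A C (fun x => g (f x));
  topological : forall (X I : Type) (Y : I -> Type) (B : forall i, fib (Y i))
      (f : forall i, X -> Y i),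
      exists A : fib X, initial_lift hom B f A /\
        (forall A' : fib X, initial_lift hom B f A' -> A' = A);
  fle_antisym : forall (X : Type) (A A' : fib X),
      fle hom A A' -> fle hom A' A -> A = A';
  meet : forall (X I : Type), (I -> fib X) -> fib X;
  meet_glb : forall (X I : Type) (fam : I -> fib X), is_glb hom fam (meet fam);
  join : forall (X I : Type), (I -> fib X) -> fib X;
  join_lub : forall (X I : Type) (fam : I -> fib X), is_lub hom fam (join fam);
  (* the concrete functor (-)^+ : A -> CABAO *)
  op : forall X : Type, fib X -> (X -> Prop) -> (X -> Prop);
  op_mor : forall (X Y : Type) (A : fib X) (B : fib Y) (f : X -> Y),
      hom A B f -> forall (T : Y -> Prop) (x : X),
      op B T (f x) -> op A (fun y => T (f y)) x
}.

Arguments hom {m X Y}.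
Arguments meet {m X I}.
Arguments join {m X I}.
Arguments op {m X}.

Record ModalFunctor (M N : ModalCat) := {
  Fobj : forall X : Type, fib M X -> fib N X;
  Fmor : forall (X Y : Type) (A : fib M X) (B : fib M Y) (f : X -> Y),
      hom A B f -> hom (Fobj A) (Fobj B) f;
  Fop : forall (X : Type) (A : fib M X), op (Fobj A) = op A
}.
Arguments Fobj {M N} _ {X} _.

(* (-)^+ injective on objects (objects over different sets are trivially
   sent to different CABAOs, so only the fibre-wise condition matters) *)
Definition op_injective (M : ModalCat) : Prop :=
  forall (X : Type) (A A' : fib M X), op A = op A' -> A = A'.

Definition preserves_meets (M N : ModalCat) (F : ModalFunctor M N) : Prop :=
  forall (X I : Type) (fam : I -> fib M X) (m : fib M X),
    is_glb (@hom M) fam m -> is_glb (@hom N) (fun i => Fobj F (fam i)) (Fobj F m).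

Definition preserves_joins (M N : ModalCat) (F : ModalFunctor M N) : Prop :=
  forall (X I : Type) (fam : I -> fib M X) (m : fib M X),
    is_lub (@hom M) fam m -> is_lub (@hom N) (fun i => Fobj F (fam i)) (Fobj F m).

Inductive form (Sigma P : Type) : Type :=
| FVar : P -> form Sigma P
| FAnd : form Sigma P -> form Sigma P -> form Sigma P
| FNeg : form Sigma P -> form Sigma P
| FBox : (Sigma -> Prop) -> form Sigma P -> form Sigma P
| FK : (Sigma -> Prop) -> (Sigma -> Prop) -> form Sigma P.

Fixpoint sem (M : ModalCat) (Sigma P X : Type) (AG : (Sigma -> Prop) -> fib M X)
    (V : P -> X -> Prop) (phi : form Sigma P) : X -> Prop :=
  match phi with
  | FVar _ p => V p
  | FAnd a b => fun x => sem AG V a x /\ sem AG V b x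
  | FNeg a => fun x => ~ sem AG V a x
  | FBox G a => op (AG G) (sem AG V a)
  | FK _ G H => fun x => forall S : X -> Prop, op (AG H) S x -> op (AG G) S x
  end.

Definition AG_l (M : ModalCat) (Sigma X : Type) (A : Sigma -> fib M X)
    (G : Sigma -> Prop) : fib M X :=
  meet (fun s : {a : Sigma | G a} => A (proj1_sig s)).

Definition AG_r (M : ModalCat) (Sigma X : Type) (A : Sigma -> fib M X)
    (G : Sigma -> Prop) : fib M X :=
  join (fun s : {a : Sigma | G a} => A (proj1_sig s)).

Definition preserves_L_l (P : Type) (M N : ModalCat) (F : ModalFunctor M N) : Prop :=
  forall (Sigma : Type), inhabited Sigma ->
  forall (X : Type) (A : Sigma -> fib M X) (V : P -> X -> Prop) (phi : form Sigma P),
    sem (AG_l A) V phi = sem (AG_l (fun a => Fobj F (A a))) V phi.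

Definition preserves_L_r (P : Type) (M N : ModalCat) (F : ModalFunctor M N) : Prop :=
  forall (Sigma : Type), inhabited Sigma ->
  forall (X : Type) (A : Sigma -> fib M X) (V : P -> X -> Prop) (phi : form Sigma P),
    sem (AG_r A) V phi = sem (AG_r (fun a => Fobj F (A a))) V phi.

(* Main.v *)
Require Import Defs.
From Stdlib Require Import FunctionalExtensionality.

Lemma glb_uniq (K : ModalCat) X I (fam : I -> fib K X) m1 m2 :
  is_glb (@hom K) fam m1 -> is_glb (@hom K) fam m2 -> m1 = m2.
Proof.
  intros [H1 H1'] [H2 H2']. apply fle_antisym; [apply H2' | apply H1']; assumption.
Qed.

Lemma lub_uniq (K : ModalCat) X I (fam : I -> fib K X) m1 m2 :
  is_lub (@hom K) fam m1 -> is_lub (@hom K) fam m2 -> m1 = m2.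
Proof.
  intros [H1 H1'] [H2 H2']. apply fle_antisym; [apply H1' | apply H2']; assumption.
Qed.

Definition SubI (I : Type) := {a : option I | exists i, a = Some i}.

Lemma glb_fw (K : ModalCat) X I (g : option I -> fib K X) m :
  is_glb (@hom K) (fun i => g (Some i)) m ->
  is_glb (@hom K) (fun s : SubI I => g (proj1_sig s)) m.
Proof.
  intros [H1 H2]. split.
  - intros [a [i ->]]. apply H1.
  - intros b Hb. apply H2. intro i. exact (Hb (exist _ (Some i) (ex_intro _ i eq_refl))).
Qed.

Lemma glb_bw (K : ModalCat) X I (g : option I -> fib K X) m :
  is_glb (@hom K) (fun s : SubI I => g (proj1_sig s)) m ->
  is_glb (@hom K) (fun i => g (Some i)) m.
Proof.
  intros [H1 H2]. split.
  - intro i. exact (H1 (exist _ (Some i) (ex_intro _ i eq_refl))).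
  - intros b Hb. apply H2. intros [a [i ->]]. apply Hb.
Qed.

Lemma lub_fw (K : ModalCat) X I (g : option I -> fib K X) m :
  is_lub (@hom K) (fun i => g (Some i)) m ->
  is_lub (@hom K) (fun s : SubI I => g (proj1_sig s)) m.
Proof.
  intros [H1 H2]. split.
  - intros [a [i ->]]. apply H1.
  - intros b Hb. apply H2. intro i. exact (Hb (exist _ (Some i) (ex_intro _ i eq_refl))).
Qed.

Lemma lub_bw (K : ModalCat) X I (g : option I -> fib K X) m :
  is_lub (@hom K) (fun s : SubI I => g (proj1_sig s)) m ->
  is_lub (@hom K) (fun i => g (Some i)) m.
Proof.
  intros [H1 H2]. split.
  - intro i. exact (H1 (exist _ (Some i) (ex_intro _ i eq_refl))).
  - intros b Hb. apply H2. intros [a [i ->]]. apply Hb.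
Qed.

Lemma sem_ext (M N : ModalCat) Sigma P X (AG1 : (Sigma -> Prop) -> fib M X)
  (AG2 : (Sigma -> Prop) -> fib N X) (V : P -> X -> Prop) :
  (forall G, op (AG1 G) = op (AG2 G)) ->
  forall phi, sem AG1 V phi = sem AG2 V phi.
Proof.
  intros H phi. induction phi; simpl.
  - reflexivity.
  - rewrite IHphi1, IHphi2. reflexivity.
  - rewrite IHphi. reflexivity.
  - rewrite IHphi, H. reflexivity.
  - rewrite !H. reflexivity.
Qed.

Definition optA (K : ModalCat) X I (d : fib K X) (fam : I -> fib K X) (o : option I) :=
  match o with None => d | Some i => fam i end.

Theorem theorem4 (P : Type) (HP : inhabited P) (M N : ModalCat)
  (F : ModalFunctor M N) (Hinj : op_injective N) :
  (preserves_meets F <-> preserves_L_l P F) /\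
  (preserves_joins F <-> preserves_L_r P F).
Proof.
  destruct HP as [p0].
  split; split.
  - intros Hpm Sigma _ X A V phi. apply sem_ext. intro G.
    unfold AG_l.
    assert (E : meet (fun s : {a : Sigma | G a} => Fobj F (A (proj1_sig s)))
                = Fobj F (meet (fun s : {a : Sigma | G a} => A (proj1_sig s)))).
    { eapply glb_uniq. apply meet_glb. apply Hpm. apply meet_glb. }
    rewrite E, Fop. reflexivity.
  - intros HL X I fam m Hm.
    set (g := @optA M X I m fam).
    set (H := fun a : option I => exists i, a = Some i).
    assert (Hop : forall S, op (AG_l g H) S = op (AG_l (fun a => Fobj F (g a)) H) S).
    { intro S. exact (HL (option I) (inhabits None) X g (fun _ => S) (FBox H (FVar _ p0))). }
    assert (E1 : AG_l g H = m).
    { eapply glb_uniq. apply meet_glb. apply (glb_fw M X I g m). exact Hm. }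
    assert (E2 : AG_l (fun a => Fobj F (g a)) H = Fobj F m).
    { apply Hinj. rewrite Fop, <- E1. symmetry.
      apply functional_extensionality. exact Hop. }
    apply (glb_bw N X I (fun a => Fobj F (g a))). rewrite <- E2. apply meet_glb.
  - intros Hpm Sigma _ X A V phi. apply sem_ext. intro G.
    unfold AG_r.
    assert (E : join (fun s : {a : Sigma | G a} => Fobj F (A (proj1_sig s)))
                = Fobj F (join (fun s : {a : Sigma | G a} => A (proj1_sig s)))).
    { eapply lub_uniq. apply join_lub. apply Hpm. apply join_lub. }
    rewrite E, Fop. reflexivity.
  - intros HL X I fam m Hm.
    set (g := @optA M X I m fam).
    set (H := fun a : option I => exists i, a = Some i).
    assert (Hop : forall S, op (AG_r g H) S = op (AG_r (fun a => Fobj F (g a)) H) S).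
    { intro S. exact (HL (option I) (inhabits None) X g (fun _ => S) (FBox H (FVar _ p0))). }
    assert (E1 : AG_r g H = m).
    { eapply lub_uniq. apply join_lub. apply (lub_fw M X I g m). exact Hm. }
    assert (E2 : AG_r (fun a => Fobj F (g a)) H = Fobj F m).
    { apply Hinj. rewrite Fop, <- E1. symmetry.
      apply functional_extensionality. exact Hop. }
    apply (lub_bw N X I (fun a => Fobj F (g a))). rewrite <- E2. apply join_lub.
Qed.
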